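(* Let $f:\mathbb{R}^d\to\mathbb{R}$ be differentiable and attain its minimum value $f^*$. Consider the iteration (scaled sign gradient descent) \[ x_{k+1}=x_k-\alpha\|g_k\|_1\operatorname{sign}(g_k),\qquad g_k:=\nabla f(x_k),\qquad k=0,1,2,\ldots, \] with constant learning rate $\alpha>0$ and arbitrary $x_0\in\mathbb{R}^d$. Suppose $f$ is $L$-smooth with respect to the $\ell_\infty$-norm, i.e. $\|\nabla f(x)-\nabla f(y)\|_1\le L\|x-y\|_\infty$ for all $x,y\in\mathbb{R}^d$, for some $L>0$. Then: \begin{enumerate} \item If in addition $f$ is $\mu$-strongly convex with respect to the $\ell_\infty$-norm for some $\mu>0$, i.e. $f(x)-f(y)\ge \nabla f(y)^\top(x-y)+\frac{\mu}{2}\|x-y\|_\infty^2$ for all $x,y$, and $0<\alpha<\frac{2}{L}$, then for all $k\ge 0$, \[ f(x_k)-f^*\le \zeta^k\,(f(x_0)-f^* ),\qquad \zeta:=1-2\mu\alpha\Big(1-\frac{L\alpha}{2}\Big)\in[0,1). \] \item If instead $f$ satisfies the Polyak–Łojasiewicz inequality $\|\nabla f(x)\|_1^2\ge 2\mu(f(x)-f^* )$ for all $x\in\mathbb{R}^d$, for some $\mu>0$, and $0<\alpha<\frac{2}{L}$, then the same bound $f(x_k)-f^*\le \zeta^k(f(x_0)-f^* )$ with the same $\zeta$ holds for all $k\ge0$. \item With only the $\ell_\infty$-smoothness assumption, for all $k\ge 0$, \[ \min_{l\in\{0,1,\ldots,k\}}\|g_l\|_1^2\le \frac{f(x_0)-f^*}{\gamma(k+1)},\qquad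 \gamma:=\alpha\Big(1-\frac{L\alpha}{2}\Big). \] \end{enumerate}
   Context: $\operatorname{sign}$ is applied componentwise; $\|\cdot\|_1$ and $\|\cdot\|_\infty$ denote the $\ell_1$- and $\ell_\infty$-norms on $\mathbb{R}^d$. *)

(* Defs.v *)
From HB Require Import structures.
From mathcomp Require Import all_boot all_order all_algebra.
From mathcomp Require Import all_classical all_reals all_analysis.
Set Implicit Arguments. Unset Strict Implicit. Unset Printing Implicit Defensive.
Import Order.TTheory GRing.Theory Num.Theory.
Import numFieldNormedType.Exports.
Local Open Scope ring_scope.

Section Defs.
Context {R : realType} {d : nat}.

Definition dotv (u v : 'rV[R]_d) : R := \sum_(i < d) u ord0 i * v ord0 i.
Definition norm1 (v : 'rV[R]_d) : R := \sum_(i < d) `|v ord0 i|.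
Definition norminf (v : 'rV[R]_d) : R := \big[Num.max/0]_(i < d) `|v ord0 i|.
Definition signv (v : 'rV[R]_d) : 'rV[R]_d := \row_(i < d) Num.sg (v ord0 i).

Definition is_gradient (f : 'rV[R]_d -> R) (g : 'rV[R]_d -> 'rV[R]_d) : Prop :=
  forall x, differentiable f x /\ forall v, ('d f x : 'rV[R]_d -> R) v = dotv (g x) v.
End Defs.

(* Main.v *)
Require Import Defs.
From HB Require Import structures.
From mathcomp Require Import all_boot all_order all_algebra.
From mathcomp Require Import all_classical all_reals all_analysis.
From mathcomp Require Import ring lra.
Import Order.TTheory GRing.Theory Num.Theory.
Import numFieldNormedType.Exports.
Local Open Scope ring_scope.
Local Open Scope classical_set_scope.

Section H.
Context {R : realType} {d : nat}.
Implicit Types u v : 'rV[R]_d.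

Lemma norm1_ge0 u : 0 <= norm1 u.
Proof. by apply: sumr_ge0 => i _. Qed.

Lemma norminf_ge0 u : 0 <= norminf u.
Proof. by rewrite /norminf; elim/big_ind: _ => // a b ha hb; rewrite le_max ha. Qed.

Lemma le_norminf u i : `|u ord0 i| <= norminf u.
Proof. exact: (le_bigmax _ (fun i => `|u ord0 i|) i). Qed.

Lemma dotv_le u v : dotv u v <= norm1 u * norminf v.
Proof.
rewrite /dotv /norm1 mulr_suml; apply: ler_sum => i _.
apply: le_trans (ler_norm _) _; rewrite normrM; apply: ler_wpM2l => //.
exact: le_norminf.
Qed.

Lemma dotvB u w v : dotv u v - dotv w v = dotv (u - w) v.
Proof. by rewrite /dotv -sumrB; apply: eq_bigr => i _; rewrite !mxE mulrBl. Qed.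

Lemma dotv_sign u (c : R) : dotv u (- (c *: signv u)) = - (c * norm1 u).
Proof.
rewrite /dotv /norm1 mulr_sumr -sumrN; apply: eq_bigr => i _.
rewrite !mxE mulrN mulrCA; congr (- (_ * _)).
by case: sgrP => h; rewrite ?mulr0 ?mulr1 ?mulrN1 ?normr0 ?gtr0_norm ?ltr0_norm.
Qed.

Lemma norminf_sign u (c : R) : 0 <= c -> norminf (- (c *: signv u)) <= c.
Proof.
move=> c0; rewrite /norminf; apply: bigmax_le => // i _.
rewrite !mxE normrN normrM ger0_norm //.
rewrite -[X in _ <= X]mulr1; apply: ler_wpM2l => //.
by case: sgrP; rewrite ?normr0 ?normr1 ?normrN1.
Qed.

Lemma norminfZ_le u (c : R) : 0 <= c -> norminf (c *: u) <= c * norminf u.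
Proof.
move=> c0; apply: bigmax_le => [|i _]; first by rewrite mulr_ge0 // norminf_ge0.
by rewrite mxE normrM ger0_norm // ler_wpM2l // le_norminf.
Qed.

Lemma descent (f : 'rV[R]_d -> R) g (L : R) : 0 <= L -> is_gradient f g ->
  (forall y z, norm1 (g y - g z) <= L * norminf (y - z)) ->
  forall y z, f y <= f z + dotv (g z) (y - z) + L / 2 * norminf (y - z) ^+ 2.
Proof.
move=> L0 hg hL y z.
set v := y - z; set A := dotv (g z) v; set n := norminf v.
pose h0 := fun t : R => f (t *: v + z).
have dh0 (t : R) : is_derive t (1 : R) h0 (dotv (g (t *: v + z)) v).
  have [df dv] := hg (t *: v + z).
  have e : (fun h : R => h^-1 *: ((h0 \o shift t) (h *: 1) - h0 t)) =
           (fun h : R => h^-1 *: ((f \o shift (t *: v + z)) (h *: v) - f (t *: v + z))).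
    apply/funext => h /=; rewrite /h0 /=.
    by rewrite [h *: 1]mulr1 scalerDl addrA.
  have der : derivable h0 t 1 by rewrite /derivable e; exact: diff_derivable.
  apply: DeriveDef => //.
  rewrite /derive e.
  change (derive f (t *: v + z) v = dotv (g (t *: v + z)) v).
  by rewrite deriveE // dv.
pose c := L / 2 * n ^+ 2.
pose phi := h0 - A \*: (@id R) - c \*: ((@id R) ^+ 2).
have dphi (t : R) : is_derive t (1 : R) phi
    (dotv (g (t *: v + z)) v - A *: 1 - c *: ((2%:R * t ^+ 1) *: 1)).
  apply: is_deriveB; apply: is_deriveZ; exact: is_deriveX.
have cphi : {within `[0, 1], continuous phi}.
  by apply: derivable_within_continuous => t _; exact: ex_derive.
have [t t01 e] := MVT_segment ler01 (fun t _ => dphi t) cphi.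
have : phi 1 - phi 0 <= 0.
  rewrite e subr0 mulr1.
  move: t01; rewrite in_itv /= => /andP[t0 t1].
  rewrite [A *: 1]mulr1 [(_ *: 1)]mulr1 expr1 -addrA -opprD.
rewrite opprD addrA subr_le0 /A dotvB.
  apply: le_trans (dotv_le _ _) _.
  apply: le_trans (ler_wpM2r (norminf_ge0 _) (hL _ _)) _.
  rewrite addrK.
  have := @norminfZ_le v t t0; rewrite -/n => hn.
  apply: (@le_trans _ _ (L * (t * n) * n)).
    by rewrite ler_wpM2r ?norminf_ge0 // ler_wpM2l.
  rewrite le_eqVlt; apply/orP; left; apply/eqP.
  rewrite /c /GRing.scale /=; by field.
move=> h; rewrite -subr_ge0; apply: le_trans (_ : 0 <= - (phi 1 - phi 0)) _.
  by rewrite oppr_ge0.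
have pE s : phi s = f (s *: v + z) - A * s - c * (s * s) by [].
rewrite !pE scale0r add0r scale1r /v subrK -/v.
rewrite le_eqVlt; apply/orP; left; apply/eqP; rewrite /c -/n; ring.
Qed.

Lemma dotv_ge u v : - (norm1 u * norminf v) <= dotv u v.
Proof.
rewrite /dotv /norm1 mulr_suml -sumrN; apply: ler_sum => i _.
apply: lerNnormlW; rewrite normrM; apply: ler_wpM2l => //.
exact: le_norminf.
Qed.
End H.

Theorem theorem1 (R : realType) (d : nat)
  (f : 'rV[R]_d -> R) (grad : 'rV[R]_d -> 'rV[R]_d) (fstar : R)
  (L alpha : R) (x : nat -> 'rV[R]_d) :
  is_gradient f grad ->
  (exists xstar, f xstar = fstar /\ forall y, fstar <= f y) ->
  0 < alpha ->
  (forall k, x k.+1 = x k - (alpha * norm1 (grad (x k))) *: signv (grad (x k))) ->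
  0 < L ->
  (forall y z, norm1 (grad y - grad z) <= L * norminf (y - z)) ->
  let zeta mu := 1 - 2 * mu * alpha * (1 - L * alpha / 2) in
  let gamma := alpha * (1 - L * alpha / 2) in
  (* 1. strong convexity w.r.t. the l_infinity norm *)
  (forall mu : R, 0 < mu ->
     (forall y z, f y - f z >= dotv (grad z) (y - z) + mu / 2 * norminf (y - z) ^+ 2) ->
     alpha < 2 / L ->
     forall k, f (x k) - fstar <= zeta mu ^+ k * (f (x 0%N) - fstar))
  /\
  (* 2. Polyak-Lojasiewicz inequality in the l1 norm *)
  (forall mu : R, 0 < mu ->
     (forall y, norm1 (grad y) ^+ 2 >= 2 * mu * (f y - fstar)) ->
     alpha < 2 / L ->
     forall k, f (x k) - fstar <= zeta mu ^+ k * (f (x 0%N) - fstar))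
  /\
  (* 3. smoothness only *)
  (alpha < 2 / L ->
     forall k,
       \big[Num.min/norm1 (grad (x 0%N)) ^+ 2]_(l < k.+1) norm1 (grad (x l)) ^+ 2
       <= (f (x 0%N) - fstar) / (gamma * k.+1%:R)).
Proof.
move=> hg [xs [fxs hmin]] a0 hx L0 hL zeta gamma.
have step k : f (x k.+1) <= f (x k) - gamma * norm1 (grad (x k)) ^+ 2.
  have := @descent _ _ f grad L (ltW L0) hg hL (x k.+1) (x k).
  have e : forall (a b : 'rV[R]_d), a - b - a = - b by move=> a b; rewrite addrAC subrr add0r.
  rewrite hx !e dotv_sign -hx.
  set N := norminf _; set n1 := norm1 _.
  have n10 : 0 <= n1 by exact: norm1_ge0.
  have hN : N <= alpha * n1 by apply: norminf_sign; rewrite mulr_ge0 // ltW.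
  have N0 : 0 <= N by exact: norminf_ge0.
  have hN2 : L / 2 * N ^+ 2 <= L / 2 * (alpha * n1) ^+ 2.
    apply: ler_wpM2l; first by rewrite divr_ge0 // ltW.
    by rewrite !expr2 ler_pM.
  move=> h; rewrite /gamma; nra.
have fge k : 0 <= f (x k) - fstar by rewrite subr_ge0.
have gam0 : alpha < 2 / L -> 0 < gamma.
  rewrite ltr_pdivlMr // => h; rewrite /gamma mulr_gt0 //; lra.
have dec k : alpha < 2 / L -> f (x k.+1) <= f (x k).
  move=> /gam0 g0; 
  have := step k; have : 0 <= gamma * norm1 (grad (x k)) ^+ 2 by rewrite mulr_ge0 ?exprn_ge0 ?norm1_ge0 // ltW.
  lra.
have mono k : alpha < 2 / L -> f (x k) <= f (x 0%N).
  move=> h; elim: k => // k ih; exact: le_trans (dec k h) ih.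
have PLres mu : 0 < mu ->
     (forall y, norm1 (grad y) ^+ 2 >= 2 * mu * (f y - fstar)) ->
     alpha < 2 / L ->
     forall k, f (x k) - fstar <= zeta mu ^+ k * (f (x 0%N) - fstar).
  move=> mu0 hPL ha.
  have g0 := gam0 ha.
  have contr k : f (x k.+1) - fstar <= zeta mu * (f (x k) - fstar).
    have := step k; have := hPL (x k).
    have := ler_wpM2l (ltW g0) (hPL (x k)).
    move=> h1 h2 h3; rewrite /zeta; rewrite /gamma in h1 h3; lra.
  have [z0|zn] := leP 0 (zeta mu).
    elim=> [|k ih]; first by rewrite expr0 mul1r.
    apply: le_trans (contr k) _; rewrite exprS -mulrA ler_wpM2l //.
  have e0 : f (x 0%N) - fstar = 0.
    have := contr 0%N; have := fge 1%N; have := fge 0%N; nra.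
  move=> k; rewrite e0 mulr0; have := mono k ha; lra.
split; [|split].
- move=> mu mu0 hsc ha; apply: PLres => // y.
  have := hsc xs y; rewrite fxs.
  have := dotv_ge (grad y) (xs - y).
  set N := norminf _; set n1 := norm1 _.
  have := sqr_ge0 (n1 - mu * N).
  move=> h1 h2 h3; nra.
- exact: PLres.
- move=> ha k; have g0 := gam0 ha.
  set m := \big[Num.min/_]_(l < k.+1) _.
  have tele j : gamma * \sum_(l < j) norm1 (grad (x l)) ^+ 2 <= f (x 0%N) - f (x j).
    elim: j => [|j ih]; first by rewrite big_ord0 mulr0 subrr.
    rewrite big_ord_recr /= mulrDr; have := step j; lra.
  have hm : k.+1%:R * m <= \sum_(l < k.+1) norm1 (grad (x l)) ^+ 2.
    have -> : k.+1%:R * m = \sum_(l < k.+1) m by rewrite sumr_const card_ord mulr_natl.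
    by apply: ler_sum => l _; exact: bigmin_le.
  rewrite ler_pdivlMr; last by rewrite mulr_gt0 // ltr0Sn.
  have := tele k.+1; have := fge k.+1.
  have := ler_wpM2l (ltW g0) hm.
  move=> h1 h2 h3; nra.
Qed.
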